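(* A lattice polytope $Q\subset\mathbb R^{\widetilde E}$ is a deformation of the polystellahedral fan $\Sigma_{\mathbf a}$ (i.e. its inner normal fan coarsens $\Sigma_{\mathbf a}$) if and only if $Q$ is a translate of $I(\pi^*(\mathrm P))$ for some polymatroid $\mathrm P$ on $E$ (of arbitrary type).
   Context: $E=\{1,\dots,m\}$, $\mathbf a\in\mathbb Z_{\ge0}^m$, $n=\sum a_i$, $\widetilde E$ an $n$-element set, $\pi:\widetilde E\to E$ with $|\pi^{-1}(i)|=a_i$, $\mathbf e_U=\sum_{j\in U}\mathbf e_j$. The polystellahedral fan $\Sigma_{\mathbf a}$ in $\mathbb R^{\widetilde E}$ has cones $\operatorname{cone}(-\mathbf e_{\widetilde E\setminus\pi^{-1}(F_1)},\dots,-\mathbf e_{\widetilde E\setminus\pi^{-1}(F_k)},\mathbf e_j:j\in I)$ for $I\subseteq\widetilde E$ and chains $F_1\subsetneq\dots\subsetneq F_k\subsetneq F_{k+1}=E$ ($k\ge0$) with $\pi^{-1}(A)\subseteq I\Rightarrow A\subseteq F_1$. A polymatroid on $E$ of arbitrary type is a submodular monotone $\operatorname{rk}_{\mathrm P}:2^E\to\mathbb Z_{\ge0}$ with $\operatorname{rk}_{\mathrm P}(\emptyset)=0$; its independence polytope is $I(\mathrm P)=\{x\in\mathbb R^E_{\ge0}:\sum_{i\in S}x_i\le\operatorname{rk}_{\mathrm P}(S)\ \forall S\subseteq E\}$. The expansion $\pi^*(\mathrm P)$ is the polymatroid on $\widetilde E$ with rank function $\operatorname{rk}_{\mathrm P}\circ\pi$;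 equivalently $I(\pi^*(\mathrm P))=p_\pi^{-1}(I(\mathrm P))\cap\mathbb R^{\widetilde E}_{\ge0}$ where $p_\pi:\mathbb R^{\widetilde E}\to\mathbb R^E$, $\mathbf e_j\mapsto\mathbf e_{\pi(j)}$. *)

(* Defs.v *)
From HB Require Import structures.
From mathcomp Require Import all_boot all_order all_algebra.
From mathcomp Require Import classical_sets reals.
Set Implicit Arguments. Unset Strict Implicit. Unset Printing Implicit Defensive.
Import Order.TTheory GRing.Theory Num.Theory.
Local Open Scope ring_scope.
Local Open Scope classical_set_scope.

Section Defs.
Variable R : realType.

Definition dotv n (w x : 'rV[R]_n) : R := \sum_(j < n) w 0 j * x 0 j.

Definition evec n (U : {set 'I_n}) : 'rV[R]_n := \row_j (j \in U)%:R.

Definition conv n (s : seq 'rV[R]_n) : set 'rV[R]_n :=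
  [set x | exists c : 'I_(size s) -> R,
     (forall i, 0 <= c i) /\ \sum_i c i = 1 /\ x = \sum_i c i *: s`_i].

Definition cone_gen n (s : seq 'rV[R]_n) : set 'rV[R]_n :=
  [set x | exists c : 'I_(size s) -> R,
     (forall i, 0 <= c i) /\ x = \sum_i c i *: s`_i].

Definition lattice_point n (v : 'rV[R]_n) : Prop := forall j, v 0 j \is a Num.int.

Definition lattice_polytope n (Q : set 'rV[R]_n) : Prop :=
  exists s : seq 'rV[R]_n, s != [::] /\ (forall v, v \in s -> lattice_point v) /\
    Q = conv s.

Definition face n (Q : set 'rV[R]_n) (w : 'rV[R]_n) : set 'rV[R]_n :=
  [set x | Q x /\ forall y, Q y -> dotv w x <= dotv w y].

(* Cones of the polystellahedral fan: chains F_1 < ... < F_k < E given as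
   the sequence [:: F_1; ...; F_k] (k >= 0), and I a subset of E~. *)
Definition polystell_chain m n (pi : 'I_n -> 'I_m)
    (I : {set 'I_n}) (F : seq {set 'I_m}) : Prop :=
  sorted (fun A B : {set 'I_m} => A \proper B) F /\
  (forall A, A \in F -> A \proper [set: 'I_m]%SET) /\
  (forall A : {set 'I_m}, pi @^-1: A \subset I -> A \subset head [set: 'I_m]%SET F).

Definition polystell_cone m n (pi : 'I_n -> 'I_m)
    (I : {set 'I_n}) (F : seq {set 'I_m}) : set 'rV[R]_n :=
  cone_gen (map (fun A : {set 'I_m} => - evec (~: (pi @^-1: A))%SET) F ++
            map (fun j : 'I_n => evec [set j]%SET) (enum I)).

(* Q is a deformation of Sigma_a: its inner normal fan coarsens Sigma_a, i.e.
   every cone of Sigma_a lies in a cone N_Q(F) = {w | F ⊆ face_w Q} of the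
   (inner) normal fan of Q, F = face_{w0} Q a face of Q. *)
Definition deformation_of_polystell m n (pi : 'I_n -> 'I_m)
    (Q : set 'rV[R]_n) : Prop :=
  forall (I : {set 'I_n}) (F : seq {set 'I_m}), polystell_chain pi I F ->
    exists w0 : 'rV[R]_n, forall w, polystell_cone pi I F w ->
      face Q w0 `<=` face Q w.

End Defs.

Definition polymatroid (T : finType) (rk : {set T} -> nat) : Prop :=
  rk (@finset.set0 T) = 0%N /\
  (forall A B : {set T}, A \subset B -> (rk A <= rk B)%N) /\
  (forall A B : {set T}, (rk (A :|: B) + rk (A :&: B) <= rk A + rk B)%N).

Definition expansion m n (pi : 'I_n -> 'I_m) (rk : {set 'I_m} -> nat)
  : {set 'I_n} -> nat := fun S => rk (pi @: S).

Definition indep_polytope (R : realType) n (rk : {set 'I_n} -> nat)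
  : set 'rV[R]_n :=
  [set x | (forall j, 0 <= x 0 j) /\
           forall S : {set 'I_n}, \sum_(j in S) x 0 j <= (rk S)%:R].

Definition translate (R : realType) n (t : 'rV[R]_n) (P : set 'rV[R]_n)
  : set 'rV[R]_n := [set x + t | x in P].

(* Main.v *)
Require Import Defs.
From HB Require Import structures.
From mathcomp Require Import all_boot all_order all_algebra.
From mathcomp Require Import classical_sets reals.
From mathcomp Require Import ring lra zify.
Import Order.TTheory GRing.Theory Num.Theory.

Module MP1.
Set Implicit Arguments. Unset Strict Implicit. Unset Printing Implicit Defensive.
Local Open Scope ring_scope.
Local Open Scope classical_set_scope.

Section Basics.
Variable R : realType.
Variable n : nat.
Implicit Types (w x y z : 'rV[R]_n).

Lemma dotvDr w x y : dotv w (x + y) = dotv w x + dotv w y.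
Proof. by rewrite /dotv -big_split /=; apply: eq_bigr => j _; rewrite mxE mulrDr. Qed.
Lemma dotvDl w x y : dotv (w + x) y = dotv w y + dotv x y.
Proof. by rewrite /dotv -big_split /=; apply: eq_bigr => j _; rewrite mxE mulrDl. Qed.
Lemma dotvZr c w x : dotv w (c *: x) = c * dotv w x.
Proof. by rewrite /dotv mulr_sumr; apply: eq_bigr => j _; rewrite mxE mulrCA. Qed.
Lemma dotvZl c w x : dotv (c *: w) x = c * dotv w x.
Proof. by rewrite /dotv mulr_sumr; apply: eq_bigr => j _; rewrite mxE mulrA. Qed.
Lemma dotvNl w x : dotv (- w) x = - dotv w x.
Proof. by rewrite -scaleN1r dotvZl mulN1r. Qed.
Lemma dotvNr w x : dotv w (- x) = - dotv w x.
Proof. by rewrite -scaleN1r dotvZr mulN1r. Qed.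
Lemma dotvBr w x y : dotv w (x - y) = dotv w x - dotv w y.
Proof. by rewrite dotvDr dotvNr. Qed.
Lemma dotv0r w : dotv w 0 = 0.
Proof. by rewrite /dotv big1 // => j _; rewrite mxE mulr0. Qed.
Lemma dotv0l w : dotv 0 w = 0.
Proof. by rewrite /dotv big1 // => j _; rewrite mxE mul0r. Qed.
Lemma dotv_sumr k (c : 'I_k -> R) (v : 'I_k -> 'rV[R]_n) w :
  dotv w (\sum_i c i *: v i) = \sum_i c i * dotv w (v i).
Proof.
elim/big_rec2: _ => [|i a b _ Hab]; first by rewrite dotv0r.
by rewrite dotvDr dotvZr Hab.
Qed.
Lemma dotv_suml k (c : 'I_k -> R) (v : 'I_k -> 'rV[R]_n) w :
  dotv (\sum_i c i *: v i) w = \sum_i c i * dotv (v i) w.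
Proof.
elim/big_rec2: _ => [|i a b _ Hab]; first by rewrite dotv0l.
by rewrite dotvDl dotvZl Hab.
Qed.
Lemma dotv_evec U x : dotv (evec R U) x = \sum_(j in U) x 0 j.
Proof.
rewrite /dotv [RHS]big_mkcond /=; apply: eq_bigr => j _; rewrite mxE.
by case: (j \in U); rewrite ?mul1r ?mul0r.
Qed.

Lemma conv_nth (s : seq 'rV[R]_n) (i : 'I_(size s)) : conv s s`_i.
Proof.
exists (fun j => (j == i)%:R); split; first by move=> j; case: (j == i).
split; first by rewrite (bigD1 i) //= eqxx big1 ?addr0 // => j /negbTE ->.
rewrite (bigD1 i) //= eqxx scale1r big1 ?addr0 // => j /negbTE ->.
by rewrite scale0r.
Qed.

Lemma conv_lb (s : seq 'rV[R]_n) w a y :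
  (forall i : 'I_(size s), a <= dotv w s`_i) -> conv s y -> a <= dotv w y.
Proof.
move=> H [c [c0 [c1 ->]]]; rewrite dotv_sumr.
have -> : a = \sum_i c i * a by rewrite -mulr_suml c1 mul1r.
by apply: ler_sum => i _; apply: ler_wpM2l.
Qed.

Lemma conv_ub (s : seq 'rV[R]_n) w a y :
  (forall i : 'I_(size s), dotv w s`_i <= a) -> conv s y -> dotv w y <= a.
Proof.
move=> H Hy; rewrite -lerN2 -dotvNl; apply: (conv_lb _ Hy) => i.
by rewrite dotvNl lerN2.
Qed.

Lemma conv_min (s : seq 'rV[R]_n) w : s != [::] ->
  exists i : 'I_(size s), forall y, conv s y -> dotv w s`_i <= dotv w y.
Proof.
case: s => // v s' _.
pose i0 : 'I_(size (v :: s')) := ord0.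
have [i _ Hi] := @arg_minP _ R _ i0 predT (fun i => dotv w (v :: s')`_i) isT.
exists i => y; apply: conv_lb => j; exact: Hi.
Qed.

Lemma conv_max (s : seq 'rV[R]_n) w : s != [::] ->
  exists i : 'I_(size s), forall y, conv s y -> dotv w y <= dotv w s`_i.
Proof.
move=> /(conv_min (- w)) [i Hi]; exists i => y /Hi.
by rewrite !dotvNl lerN2.
Qed.

End Basics.

End MP1.
Import MP1.

Module MP2.
Set Implicit Arguments. Unset Strict Implicit. Unset Printing Implicit Defensive.
Local Open Scope ring_scope.
Local Open Scope classical_set_scope.

Section Gordan.
Variable R : realType.
Variable n : nat.

Lemma lift_max_widen k (j : 'I_k) : lift ord_max j = widen_ord (leqnSn k) j.
Proof. by apply: val_inj; rewrite /= /bump leqNgt ltn_ord. Qed.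

Lemma gordan k (a : 'I_k -> 'rV[R]_n) :
  (exists w, forall i, 1 <= dotv w (a i)) \/
  (exists c : 'I_k -> R, (forall i, 0 <= c i) /\ \sum_i c i = 1 /\
     \sum_i c i *: a i = 0).
Proof.
elim: k a => [|k IH] a; first by left; exists 0 => -[].
pose a' i := a (widen_ord (leqnSn k) i).
pose ak := a ord_max.
have ext : forall c' : 'I_k -> R, forall ck, (forall i, 0 <= c' i) -> 0 <= ck ->
   \sum_i c' i + ck = 1 -> \sum_i c' i *: a' i + ck *: ak = 0 ->
   exists c : 'I_k.+1 -> R, (forall i, 0 <= c i) /\ \sum_i c i = 1 /\
     \sum_i c i *: a i = 0.
  move=> c' ck c'0 ck0 s1 s0.
  exists (fun i : 'I_k.+1 => if insub (val i) is Some i' then c' i' else ck).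
  split; first by move=> i; case: insub.
  rewrite !big_ord_recr /= insubF ?ltnn //; split.
    rewrite -s1; congr (_ + _); apply: eq_bigr => i _.
    by rewrite valK.
  rewrite -[in RHS]s0 /a' /ak; congr (_ + _); apply: eq_bigr => i _.
  by rewrite valK.
have [[w' Hw']|[c' [c'0 [c'1 c'a]]]] := IH a'; last first.
  by right; apply: (ext c' 0) => //; rewrite ?addr0 // scale0r addr0.
pose b := dotv w' ak.
have [b1|b1] := lerP 1 b.
  by left; exists w' => i; have [j ->|->] := unliftP ord_max i; [rewrite lift_max_widen; exact: Hw'|].
have [b0|b0] := ltrP 0 b.
  left; exists (b^-1 *: w') => i.
  have [j ->|->] := unliftP ord_max i; rewrite dotvZl.
    have := Hw' j; rewrite /a' lift_max_widen => Hj.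
    by rewrite ler_pdivlMl // mulr1; apply: le_trans (ltW b1) Hj.
  by rewrite mulVf ?gt_eqF.
have [bz|bneg] := eqVneq b 0.
  have [ak0|akn0] := eqVneq ak 0.
    right; apply: (ext (fun _ => 0) 1) => //.
    - by rewrite big1 ?add0r.
    - by rewrite big1 ?add0r -/ak ?ak0 ?scaler0 // => i _; rewrite scale0r.
  pose N := dotv ak ak.
  have N0 : 0 < N.
    rewrite lt_def; apply/andP; split; last first.
      by rewrite /N /dotv sumr_ge0 // => j _; rewrite -expr2 sqr_ge0.
    apply: contra akn0 => /eqP /psumr_eq0P HN; apply/eqP/rowP => j.
    rewrite mxE; have := HN (fun i _ => ltac:(by rewrite -expr2 sqr_ge0)) j isT => /eqP.
    by rewrite -expr2 sqrf_eq0 => /eqP.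
  pose lam := 1 + \sum_i `|dotv ak (a' i)| / N.
  left; exists (lam *: w' + N^-1 *: ak) => i.
  have [j ->|->] := unliftP ord_max i; rewrite dotvDl !dotvZl; last first.
    by rewrite -/b bz mulr0 add0r mulVf ?gt_eqF.
  have Hj := Hw' j; rewrite /a' in Hj.
  rewrite lift_max_widen.
  set aj := a (widen_ord _ j) in Hj *.
  have Hs : `|dotv ak aj| / N <= \sum_i `|dotv ak (a' i)| / N.
    by rewrite (bigD1 j) //= lerDl sumr_ge0 // => i0 _; apply: divr_ge0 => //; exact: ltW.
  have lam0 : 0 <= lam by rewrite addr_ge0 // sumr_ge0 // => i0 _; apply: divr_ge0 => //; exact: ltW.
  have H1 : lam <= lam * dotv w' aj by exact: (ler_peMr lam0 Hj).
  have H2 : - (`|dotv ak aj| / N) <= N^-1 * dotv ak aj.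
    rewrite [N^-1 * _]mulrC -mulNr ler_pM2r ?invr_gt0 //.
    by rewrite lerNl -normrN ler_norm.
  have lamE : lam = 1 + \sum_i `|dotv ak (a' i)| / N by [].
  clearbody lam; lra.
have bn : b < 0 by rewrite lt_neqAle bneg b0.
pose bb i := (dotv w' (a' i) - b)^-1 *: (dotv w' (a' i) *: ak - b *: a' i).
have pos i : 0 < dotv w' (a' i) - b by have := Hw' i; lra.
have [[u Hu]|[c [c0 [c1 ca]]]] := IH bb; last first.
  right; pose d i := c i / (dotv w' (a' i) - b).
  apply: (ext (fun i => - b * d i) (\sum_i d i * dotv w' (a' i))).
  - move=> i; apply: mulr_ge0; first by rewrite oppr_ge0 ltW.
    exact: divr_ge0 (c0 i) (ltW (pos i)).
  - apply: sumr_ge0 => i _; apply: mulr_ge0; first exact: divr_ge0 (c0 i) (ltW (pos i)).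
    by have := Hw' i; lra.
  - rewrite -c1 -big_split /=; apply: eq_bigr => i _; rewrite /d.
    by field; rewrite gt_eqF.
  - rewrite scaler_suml -big_split /= -[RHS]ca; apply: eq_bigr => i _.
    rewrite /bb /d scalerA scalerBr !scalerA; set t := _ - b.
    rewrite addrC -scaleNr; congr (_ + _ *: _).
    by ring.
pose lam := (dotv u ak - 1) / (- b).
left; exists (u + lam *: w') => i.
have [j ->|->] := unliftP ord_max i; rewrite dotvDl dotvZl; last first.
  rewrite -/b /lam.
  have -> : (dotv u ak - 1) / - b * b = 1 - dotv u ak.
    by field; rewrite lt_eqF.
  lra.
rewrite lift_max_widen.
have := Hu j; rewrite /bb dotvZr dotvBr !dotvZr /a'.
set al := dotv w' (a (widen_ord _ j)).
set xj := dotv u (a (widen_ord _ j)).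
set y := dotv u ak => H.
have p := pos j; rewrite /a' -/al in p.
rewrite ler_pdivlMl // mulr1 in H.
rewrite /lam -subr_ge0.
have -> : xj + (y - 1) / - b * al - 1 = (al * y - b * xj - (al - b)) / (- b).
  by field; rewrite lt_eqF.
by rewrite divr_ge0 // ?subr_ge0 // oppr_ge0 ltW.
Qed.

Lemma separation (s : seq 'rV[R]_n) z :
  conv s z \/ exists w, forall y, conv s y -> dotv w z + 1 <= dotv w y.
Proof.
have [[w Hw]|[c [c0 [c1 ca]]]] := gordan (fun i : 'I_(size s) => s`_i - z).
  right; exists w => y; apply: conv_lb => i.
  by have := Hw i; rewrite dotvBr; lra.
left; exists c; split=> //; split=> //.
apply/eqP; rewrite eq_sym -subr_eq0; apply/eqP.
transitivity (\sum_i c i *: (s`_i - z)); last exact: ca.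
under [RHS]eq_bigr do rewrite scalerBr.
by rewrite sumrB -scaler_suml c1 scale1r.
Qed.

End Gordan.

End MP2.
Import MP2.

Module MP3.
Set Implicit Arguments. Unset Strict Implicit. Unset Printing Implicit Defensive.
Local Open Scope ring_scope.
Local Open Scope classical_set_scope.

Section Cone.
Variable R : realType.
Variable n : nat.

Lemma dotv_suml1 k (v : 'I_k -> 'rV[R]_n) w :
  dotv (\sum_i v i) w = \sum_i dotv (v i) w.
Proof.
elim/big_rec2: _ => [|i a b _ Hab]; first by rewrite dotv0l.
by rewrite dotvDl Hab.
Qed.

Lemma cone_nth (gs : seq 'rV[R]_n) g : g \in gs -> cone_gen gs g.
Proof.
move=> gin; have ilt : (index g gs < size gs)%N by rewrite index_mem.
pose i0 : 'I_(size gs) := Ordinal ilt.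
exists (fun j => (j == i0)%:R); split; first by move=> j; case: (j == i0).
rewrite (bigD1 i0) //= eqxx scale1r big1 ?addr0 ?nth_index //.
by move=> j /negbTE ->; rewrite scale0r.
Qed.

Lemma coneA (Q : set 'rV[R]_n) (gs : seq 'rV[R]_n) x : Q x ->
  (forall g, g \in gs -> forall y, Q y -> dotv g x <= dotv g y) ->
  exists w0, forall w, cone_gen gs w -> face Q w0 `<=` face Q w.
Proof.
move=> Qx Hx; exists (\sum_(i < size gs) gs`_i) => w [c [c0 ->]] y; rewrite /face /= => -[Qy Hy].
have Hi (i : 'I_(size gs)) : dotv gs`_i x <= dotv gs`_i y by apply: Hx; [exact: mem_nth | exact: Qy].
have E : forall i : 'I_(size gs), dotv gs`_i y = dotv gs`_i x.
  have S : \sum_(i < size gs) (dotv gs`_i y - dotv gs`_i x) = 0.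
    apply/eqP; rewrite eq_le sumr_ge0 ?andbT; last by move=> i _; rewrite subr_ge0.
    by rewrite sumrB -!dotv_suml1 subr_le0 Hy.
  move=> i; apply/eqP; rewrite -subr_eq0; apply/eqP.
  by move/psumr_eq0P: S => -> // j _; rewrite subr_ge0.
split=> // y' Qy'; rewrite !dotv_suml; apply: ler_sum => i _.
by rewrite E; apply: ler_wpM2l => //; apply: Hx => //; exact: mem_nth.
Qed.

Lemma coneB (s : seq 'rV[R]_n) (gs : seq 'rV[R]_n) : s != [::] ->
  (exists w0, forall w, cone_gen gs w -> face (conv s) w0 `<=` face (conv s) w) ->
  exists x, conv s x /\ forall g, g \in gs -> forall y, conv s y -> dotv g x <= dotv g y.
Proof.
move=> sn [w0 H]; have [i Hi] := conv_min w0 sn.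
have F0 : face (conv s) w0 s`_i by split=> //; exact: conv_nth.
exists s`_i; split; first exact: conv_nth.
by move=> g /cone_nth /H /(_ _ F0) [].
Qed.

End Cone.

End MP3.
Import MP3.

Module MP4.
Set Implicit Arguments. Unset Strict Implicit. Unset Printing Implicit Defensive.
Local Open Scope ring_scope.

Section Abel.
Variable R : realType.
Variable T : eqType.
Variables (nu V : T -> R).

Lemma abel (L : seq T) (S0 : R) :
  sorted (fun i j => nu i <= nu j) L -> all (fun i => nu i <= 0) L ->
  (forall p, S0 + \sum_(i <- take p L) V i <= 0) ->
  0 <= \sum_(i <- L) nu i * V i + (if L is i :: _ then nu i else 0) * S0.
Proof.
elim: L S0 => [|i L IH] S0 /=; first by move=> *; rewrite big_nil mul0r addr0.
move=> Hs /andP [Hi Ha] Hp.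
have Hs' : sorted (fun i j => nu i <= nu j) L by move: Hs; case: L {IH Ha Hp} => //= j L /andP [].
have Hh : nu i <= (if L is j :: _ then nu j else 0).
  by case: L Hs {IH Hs' Ha Hp} => //= j L /andP [].
have H1 : S0 + V i <= 0 by have := Hp 1%N; rewrite /= take0 big_cons big_nil addr0.
have := IH (S0 + V i) Hs' Ha.
have Hp' : forall p, S0 + V i + \sum_(j <- take p L) V j <= 0.
  by move=> p; have := Hp p.+1; rewrite /= big_cons addrA.
move=> /(_ Hp'); rewrite big_cons.
set h := (if L is j :: _ then nu j else 0) in Hh *.
set s := \sum_(j <- L) _ => H.
have : 0 <= (nu i - h) * (S0 + V i) by rewrite mulr_le0 // subr_le0.
nra.
Qed.

End Abel.

Section Greedy.
Variable R : realType.
Variable T : finType.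
Variable rk : {set T} -> nat.
Hypothesis rk0 : rk finset.set0 = 0%N.
Hypothesis rkmono : forall A B : {set T}, A \subset B -> (rk A <= rk B)%N.
Hypothesis rksub : forall A B : {set T}, (rk (A :|: B) + rk (A :&: B) <= rk A + rk B)%N.

Definition gvec (L : seq T) (i : T) : R :=
  if i \in L then (rk [set x in take (index i L).+1 L])%:R - (rk [set x in take (index i L) L])%:R
  else 0.

Lemma gvec_ge0 L i : 0 <= gvec L i.
Proof.
rewrite /gvec; case: ifP => // _; rewrite subr_ge0 ler_nat; apply: rkmono.
apply/fintype.subsetP => x; rewrite !inE -(take_takel _ (leqnSn _)); exact: mem_take.
Qed.

Lemma gvec_take L p i : i \in take p L -> gvec (take p L) i = gvec L i.
Proof.
move=> Hi; have HiL : i \in L := mem_take Hi.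
have Hidx : index i L = index i (take p L).
  by rewrite -[L in index _ L](cat_take_drop p) index_cat Hi.
have lt := index_ltn Hi.
by rewrite /gvec Hi HiL -Hidx !take_takel // ltnW.
Qed.

Lemma set_rcons (L : seq T) a : [set x in rcons L a] = a |: [set x in L].
Proof. by apply/finset.setP => x; rewrite !inE mem_rcons in_cons. Qed.

Lemma gvec_last L a : a \notin L ->
  gvec (rcons L a) a = (rk (a |: [set x in L]))%:R - (rk [set x in L])%:R.
Proof.
move=> aL; rewrite /gvec mem_rcons mem_head -cats1 index_cat (negbTE aL) /= eqxx addn0.
rewrite take_oversize ?size_cat ?addn1 // take_size_cat //.
by rewrite cats1 set_rcons.
Qed.

Lemma gvec_rcons L a i : i != a -> gvec (rcons L a) i = gvec L i.
Proof.
move=> ia; have [iL|iL] := boolP (i \in L).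
  have E : take (size L) (rcons L a) = L by rewrite -cats1 take_size_cat.
  by rewrite -[in RHS]E gvec_take ?E.
by rewrite /gvec mem_rcons in_cons (negbTE ia) (negbTE iL).
Qed.

Lemma gvec_ub L : uniq L -> forall U : {set T},
  \sum_(i in U) gvec L i <= (rk (U :&: [set x in L]))%:R.
Proof.
elim/last_ind: L => [|L a IH].
  by move=> _ U; rewrite big1 ?ler0n // => i _; rewrite /gvec in_nil.
rewrite rcons_uniq => /andP [aL uL] U.
have IH' := IH uL.
have [aU|aU] := boolP (a \in U).
  rewrite (bigD1 a) //= gvec_last //.
  have -> : \sum_(i in U | i != a) gvec (rcons L a) i = \sum_(i in U :\ a) gvec L i.
    rewrite [RHS](eq_bigl (fun i => (i \in U) && (i != a))); last by move=> i; rewrite !inE andbC.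
    by apply: eq_bigr => i /andP [_ ia]; rewrite gvec_rcons.
  have H1 := IH' (U :\ a).
  have E0 : (U :\ a) :&: [set x in L] = U :&: [set x in L].
    apply/finset.setP => x; rewrite !inE; have [->|] := eqVneq x a; by rewrite ?(negbTE aL) ?andbF.
  rewrite E0 in H1.
  have H2 := rksub [set x in L] (U :&: [set x in rcons L a]).
  have E1 : [set x in L] :|: U :&: [set x in rcons L a] = a |: [set x in L].
    apply/finset.setP => x; rewrite !inE mem_rcons in_cons.
    have [->|] := eqVneq x a; rewrite ?aU ?orbT //=.
    by case: (x \in L); case: (x \in U).
  have E2 : [set x in L] :&: (U :&: [set x in rcons L a]) = U :&: [set x in L].
    apply/finset.setP => x; rewrite !inE mem_rcons in_cons.
    have [->|] := eqVneq x a; rewrite ?(negbTE aL) ?andbF //=.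
    by case: (x \in L); case: (x \in U).
  rewrite E1 E2 in H2.
  move: H2; rewrite -(ler_nat R) !natrD => H2; lra.
have -> : \sum_(i in U) gvec (rcons L a) i = \sum_(i in U) gvec L i.
  by apply: eq_bigr => i iU; rewrite gvec_rcons //; apply: contraNneq aU => <-.
have -> : U :&: [set x in rcons L a] = U :&: [set x in L].
  apply/finset.setP => x; rewrite !inE mem_rcons in_cons.
  by have [->|] := eqVneq x a; rewrite ?(negbTE aU).
exact: IH'.
Qed.

Lemma gvec_tight L : uniq L -> \sum_(i in [set x in L]) gvec L i = (rk [set x in L])%:R.
Proof.
elim/last_ind: L => [|L a IH].
  move=> _; have -> : [set x in [::] : seq T] = finset.set0 by apply/finset.setP => x; rewrite !inE.
  by rewrite big_set0 rk0.
rewrite rcons_uniq => /andP [aL uL].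
rewrite set_rcons big_setU1 ?inE //= gvec_last //.
rewrite (eq_bigr (gvec L)) ?IH //; first by rewrite subrK.
by move=> i; rewrite inE => iL; rewrite gvec_rcons //; apply: contraNneq aL => <-.
Qed.

End Greedy.

End MP4.
Import MP4.

Module MP5.
Set Implicit Arguments. Unset Strict Implicit. Unset Printing Implicit Defensive.
Local Open Scope ring_scope.

Section Common.
Variable R : realType.
Variables m n : nat.
Variable pi : 'I_n -> 'I_m.

Definition gens (I : {set 'I_n}) (F : seq {set 'I_m}) : seq 'rV[R]_n :=
  map (fun A : {set 'I_m} => - evec R (~: (pi @^-1: A))%SET) F ++
  map (fun j : 'I_n => evec R [set j]%SET) (enum I).

Lemma gensP (I : {set 'I_n}) (F : seq {set 'I_m}) g : g \in gens I F ->
  (exists2 A, A \in F & g = - evec R (pi @^-1: (~: A))) \/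
  (exists2 j, j \in I & g = evec R [set j]).
Proof.
rewrite mem_cat => /orP [/mapP [A AF ->]|/mapP [j jI ->]].
  by left; exists A => //; rewrite preimsetC.
by right; exists j => //; rewrite mem_enum in jI.
Qed.

Lemma gens_memA (I : {set 'I_n}) (F : seq {set 'I_m}) A : A \in F -> - evec R (pi @^-1: (~: A)) \in gens I F.
Proof. by move=> AF; rewrite mem_cat preimsetC; apply/orP; left; apply/mapP; exists A. Qed.

Lemma gens_memI (I : {set 'I_n}) (F : seq {set 'I_m}) j : j \in I -> evec R [set j] \in gens I F.
Proof. by move=> jI; rewrite mem_cat; apply/orP; right; apply/mapP; exists j; rewrite ?mem_enum. Qed.

Lemma dotv_evec1 j (x : 'rV[R]_n) : dotv (evec R [set j]) x = x 0 j.
Proof. by rewrite dotv_evec big_set1. Qed.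

Lemma sum_delta (S : {set 'I_n}) (o : option 'I_n) :
  \sum_(j in S) (o == Some j)%:R = (if o is Some j0 then (j0 \in S)%:R else 0) :> R.
Proof.
case: o => [j0|]; last by rewrite big1.
have [j0S|j0S] := boolP (j0 \in S).
  rewrite (bigD1 j0) //= eqxx big1 ?addr0 // => j /andP [_ jj].
  by case: eqP => // -[] E; rewrite E eqxx in jj.
rewrite big1 // => j jS; case: eqP => // -[] E.
by rewrite E jS in j0S.
Qed.

End Common.

Section Build.
Variable m : nat.

Lemma build (F : seq {set 'I_m}) : sorted (fun A B : {set 'I_m} => A \proper B) F ->
  exists L : seq 'I_m, [/\ uniq L, [set x in L] = ~: head [set: 'I_m] F &
    forall A, A \in F -> exists2 p, (p <= size L)%N & [set x in take p L] = ~: A].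
Proof.
elim: F => [|A F IH].
  move=> _; exists [::]; split=> //; apply/finset.setP => x; by rewrite !inE.
move=> Hs; have HsF : sorted (fun A B : {set 'I_m} => A \proper B) F by apply: path_sorted Hs.
have AH : A \subset head [set: 'I_m] F.
  by case: F Hs {IH HsF} => [|B F] /=; [rewrite finset.subsetT | case/andP => /fintype.proper_sub].
have [L' [uL' sL' pL']] := IH HsF.
set h := head _ F in sL' AH.
have memL : forall x, (x \in L') = (x \in ~: h) by move=> x; rewrite -sL' inE.
exists (L' ++ enum (~: A :\: ~: h)); split.
- rewrite cat_uniq uL' enum_uniq andbT /=; apply/hasPn => x.
  rewrite mem_enum !inE => /andP [xh _]; apply/negP => xL.
  by have := xL; rewrite memL inE; move/negP: xh.
- apply/finset.setP => x; rewrite !inE mem_cat mem_enum !inE.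
  rewrite memL inE.
  have [xh|xh] := boolP (x \in h) => //=; apply/esym/negP => xA; move/negP: xh; apply; exact: (fintype.subsetP AH).
- move=> B; rewrite in_cons => /orP [/eqP ->|BF].
    exists (size (L' ++ enum (~: A :\: ~: h))) => //; rewrite take_size.
    apply/finset.setP => x; rewrite !inE mem_cat mem_enum !inE.
    rewrite memL inE.
    have [xh|xh] := boolP (x \in h) => //=; apply/esym/negP => xA; move/negP: xh; apply; exact: (fintype.subsetP AH).
  have [p ps pE] := pL' B BF; exists p; first by rewrite size_cat (leq_trans ps) // leq_addr.
  by rewrite takel_cat.
Qed.

End Build.

End MP5.
Import MP5.

Module MP6.
Set Implicit Arguments. Unset Strict Implicit. Unset Printing Implicit Defensive.
Local Open Scope ring_scope.

Section DirB.
Variable R : realType.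
Variables m n : nat.
Variable pi : 'I_n -> 'I_m.

Lemma dirB (rk : {set 'I_m} -> nat) (t : 'rV[R]_n) : polymatroid rk ->
  deformation_of_polystell pi (translate t (@indep_polytope R n (expansion pi rk))).
Proof.
move=> [rk0 [rkmono rksub]] I F [Hs [Hp Hh]].
have [L [uL sL pL]] := build Hs.
set G := ~: head [set: 'I_m] F in sL.
have rep : forall i, i \in G -> exists j, pi j = i /\ j \notin I.
  move=> i iG; have : ~~ (pi @^-1: [set i] \subset I).
    apply/negP => /Hh /fintype.subsetP /(_ i); rewrite inE eqxx => /(_ isT) ih.
    by rewrite inE ih in iG.
  by case/subsetPn => j; rewrite !inE => /eqP pj jI; exists j.
pose r i := [pick j | (pi j == i) && (j \notin I)].
have rP : forall i j, r i = Some j -> pi j = i /\ j \notin I.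
  by move=> i j; rewrite /r; case: pickP => // j' /andP [/eqP ? ?] [<-].
have rG : forall i, i \in G -> exists j, r i = Some j.
  move=> i /rep [j [pj jI]]; rewrite /r; case: pickP => [j' _|/(_ j)]; first by exists j'.
  by rewrite pj eqxx jI.
pose g := gvec R rk L.
pose x' := \row_j (if r (pi j) == Some j then g (pi j) else 0) : 'rV[R]_n.
have x'E : forall j, x' 0 j = \sum_i (r i == Some j)%:R * g i.
  move=> j; rewrite mxE (bigD1 (pi j)) //= big1 ?addr0.
    by case: eqP; rewrite ?mul1r ?mul0r.
  move=> i /negbTE ij; case: eqP => [/rP [pj _]|]; last by rewrite mul0r.
  by rewrite pj eqxx in ij.
have sumE : forall S : {set 'I_n}, \sum_(j in S) x' 0 j =
    \sum_i (if r i is Some j0 then (j0 \in S)%:R else 0) * g i.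
  move=> S; under eq_bigr do rewrite x'E.
  by rewrite exchange_big /=; apply: eq_bigr => i _; rewrite -mulr_suml sum_delta.
have x'ind : indep_polytope (expansion pi rk) x'.
  split.
    by move=> j; rewrite mxE; case: ifP => // _; exact: gvec_ge0.
  move=> S; rewrite sumE /expansion.
  pose U := [set i | if r i is Some j0 then j0 \in S else false].
  have -> : \sum_i (if r i is Some j0 then (j0 \in S)%:R else 0) * g i = \sum_(i in U) g i.
    rewrite [RHS]big_mkcond /=; apply: eq_bigr => i _; rewrite inE.
    case: (r i) => [j0|]; last by rewrite mul0r.
    by case: (j0 \in S); rewrite ?mul1r ?mul0r.
  apply: le_trans (gvec_ub R rksub uL U) _.
  rewrite ler_nat; apply: rkmono; apply/fintype.subsetP => i; rewrite !inE => /andP [iU _].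
  move: iU; case E: (r i) => [j0|] // j0S; have [pj _] := rP _ _ E.
  by rewrite -pj; apply: imset_f.
have AG : forall A, A \in F -> ~: A \subset G.
  move=> A AF; have [p _ pE] := pL A AF; rewrite -pE -sL.
  by apply/fintype.subsetP => x; rewrite !inE; apply: mem_take.
have tight : forall A, A \in F -> \sum_(j in pi @^-1: ~: A) x' 0 j = (rk (~: A))%:R.
  move=> A AF; rewrite sumE.
  have -> : \sum_i (if r i is Some j0 then (j0 \in pi @^-1: ~: A)%:R else 0) * g i =
            \sum_(i in ~: A) g i.
    rewrite [RHS]big_mkcond /=; apply: eq_bigr => i _.
    have [iA|iA] := boolP (i \in ~: A).
      have [j0 E] := rG i (fintype.subsetP (AG A AF) i iA).
      by rewrite E inE; have [-> _] := rP _ _ E; rewrite iA mul1r.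
    case E: (r i) => [j0|]; last by rewrite mul0r.
    by rewrite inE; have [-> _] := rP _ _ E; rewrite (negbTE iA) mul0r.
  have [p _ pE] := pL A AF.
  rewrite -pE -(gvec_tight R rk0 (take_uniq p uL)).
  by apply: eq_bigr => i; rewrite inE => ip; rewrite gvec_take.
have zind : forall (A : {set 'I_m}) (z : 'rV[R]_n), A \in F -> indep_polytope (expansion pi rk) z ->
    \sum_(j in pi @^-1: ~: A) z 0 j <= (rk (~: A))%:R.
  move=> A z AF [_ Hz]; apply: le_trans (Hz _) _; rewrite /expansion ler_nat.
  apply: rkmono; apply/fintype.subsetP => i /imsetP [j]; rewrite inE => jA ->; exact: jA.
have x'I : forall j, j \in I -> x' 0 j = 0.
  move=> j jI; rewrite mxE; case: eqP => // /rP [_ jI'].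
  by rewrite jI in jI'.
apply: (@coneA R n _ _ (x' + t)); first by exists x'.
move=> gg /gensP [[A AF ->]|[j jI ->]] y [z zind' <-]; rewrite !dotvDr lerD2r.
  rewrite !dotvNl lerN2 !dotv_evec tight //; exact: zind.
by rewrite !dotv_evec1 x'I //; case: zind' => Hz _; exact: Hz.
Qed.

End DirB.

End MP6.
Import MP6.

Module MP8.
Set Implicit Arguments. Unset Strict Implicit. Unset Printing Implicit Defensive.

Lemma sorted_iota_step (r : rel nat) a k :
  (forall p, a <= p -> p.+1 < a + k -> r p p.+1) -> sorted r (iota a k).
Proof.
elim: k a => [|k IH] a H //=.
case: k IH H => [|k] IH H //=.
apply/andP; split; first by apply: H; lia.
have := IH a.+1 => /= -> // p ap pk; apply: H; lia.
Qed.

Lemma sorted_rev_iota (T : Type) (r : rel T) (f : nat -> T) k :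
  (forall p, 0 < p -> p < k -> r (f p.+1) (f p)) -> sorted r (map f (rev (iota 1 k))).
Proof.
move=> H; rewrite map_rev rev_sorted sorted_map.
apply: sorted_iota_step => p p1 pk /=; apply: H; lia.
Qed.

Lemma head_rev_iota (T : Type) (d : T) (f : nat -> T) k :
  head d (map f (rev (iota 1 k))) = if k is k'.+1 then f k else d.
Proof.
case: k => // k.
have -> : iota 1 k.+1 = rcons (iota 1 k) k.+1 by rewrite -cats1 -(addn1 k) iotaD /= add1n addn1.
by rewrite rev_rcons.
Qed.

End MP8.
Import MP8.

Module MP7.
Set Implicit Arguments. Unset Strict Implicit. Unset Printing Implicit Defensive.
Local Open Scope ring_scope.

Section Sums.
Variable R : realType.
Variable T : finType.

Lemma sum_sub (X Y : {set T}) (f : T -> R) : X \subset Y ->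
  (forall j, j \in Y -> 0 <= f j) -> \sum_(j in X) f j <= \sum_(j in Y) f j.
Proof.
move=> XY f0; rewrite [X in _ <= X](@big_setID _ _ _ _ Y X) /=.
have -> : Y :&: X = X by apply/finset.setIidPr.
rewrite lerDl sumr_ge0 // => j; rewrite inE => /andP [_]; exact: f0.
Qed.

Lemma sum_UI (X Y : {set T}) (f : T -> R) :
  \sum_(j in X :|: Y) f j + \sum_(j in X :&: Y) f j = \sum_(j in X) f j + \sum_(j in Y) f j.
Proof.
rewrite (@big_setID _ _ _ _ (X :|: Y) X) /= [in RHS](@big_setID _ _ _ _ Y X) /=.
have -> : (X :|: Y) :&: X = X by apply/finset.setIidPr; exact: finset.subsetUl.
have -> : (X :|: Y) :\: X = Y :\: X.
  by apply/finset.setP => x; rewrite !inE; case: (x \in X); rewrite ?andbF ?andbT.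
rewrite finset.setIC; lra.
Qed.

End Sums.

Section DirA.
Variable R : realType.
Variables m n : nat.
Variable pi : 'I_n -> 'I_m.
Variable s : seq 'rV[R]_n.
Hypothesis sn : s != [::].
Hypothesis slat : forall v, v \in s -> lattice_point v.
Hypothesis Hdef : deformation_of_polystell pi (conv s).
Variable t : 'rV[R]_n.
Hypothesis Qt : conv s t.
Hypothesis Ht : forall j y, conv s y -> t 0 j <= y 0 j.

Lemma t_int j : t 0 j \is a Num.int.
Proof.
have [i Hi] := conv_min (evec R [set j]) sn.
have := Hi t Qt; have := Ht j (conv_nth i); rewrite !dotv_evec1 => H1 H2.
have -> : t 0 j = s`_i 0 j by apply/eqP; rewrite eq_le H1 H2.
by apply: slat; exact: mem_nth.
Qed.

Definition fA (A : {set 'I_m}) (v : 'rV[R]_n) : R := \sum_(j in pi @^-1: A) (v 0 j - t 0 j).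

Lemma fA_dot A v : fA A v = dotv (evec R (pi @^-1: A)) v - dotv (evec R (pi @^-1: A)) t.
Proof. by rewrite /fA !dotv_evec sumrB. Qed.

Lemma fA_ge0 A y : conv s y -> 0 <= fA A y.
Proof. by move=> Qy; rewrite /fA sumr_ge0 // => j _; rewrite subr_ge0 Ht. Qed.

Lemma fA_nat A (i : 'I_(size s)) : fA A s`_i \is a Num.nat.
Proof.
rewrite natrEint fA_ge0; last exact: conv_nth.
rewrite andbT /fA; apply: rpred_sum => j _.
by rewrite rpredB ?t_int //; apply: slat; exact: mem_nth.
Qed.

Definition rkA (A : {set 'I_m}) : nat := \max_(i < size s) Num.truncn (fA A s`_i).

Lemma fA_trunc A (i : 'I_(size s)) : (Num.truncn (fA A s`_i))%:R = fA A s`_i.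
Proof. by apply/eqP; rewrite -natrEtruncn fA_nat. Qed.

Lemma rkA_ub A y : conv s y -> fA A y <= (rkA A)%:R.
Proof.
move=> Qy; rewrite fA_dot lerBlDr; apply: (conv_ub _ Qy) => i.
rewrite -lerBlDr -fA_dot -fA_trunc ler_nat; exact: leq_bigmax.
Qed.

Lemma rkA_att A : exists i : 'I_(size s), fA A s`_i = (rkA A)%:R.
Proof.
have s0 : (0 < #|'I_(size s)|)%N by rewrite card_ord lt0n size_eq0.
have [i Hi] := bigop.eq_bigmax (fun i : 'I_(size s) => Num.truncn (fA A s`_i)) s0.
by exists i; rewrite /rkA Hi fA_trunc.
Qed.

Lemma rkA_max A x : conv s x -> (forall y, conv s y -> fA A y <= fA A x) ->
  fA A x = (rkA A)%:R.
Proof.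
move=> Qx Hx; apply/eqP; rewrite eq_le rkA_ub //=.
by have [i <-] := rkA_att A; apply: Hx; exact: conv_nth.
Qed.

Lemma fA0 v : fA finset.set0 v = 0.
Proof. by rewrite /fA preimset0 big_set0. Qed.

Lemma rkA0 : rkA finset.set0 = 0%N.
Proof. by rewrite /rkA big1 // => i _; rewrite fA0 truncn0. Qed.


Lemma set_nil : [set x in ([::] : seq 'I_m)] = finset.set0.
Proof. by apply/finset.setP => x; rewrite !inE. Qed.

Lemma chain_pt (I : {set 'I_n}) (L : seq 'I_m) : uniq L ->
  (forall i, i \in L -> exists j, pi j = i /\ j \notin I) ->
  exists x, [/\ conv s x, forall j, j \in I -> x 0 j = t 0 j &
     forall p, fA [set i in take p L] x = (rkA [set i in take p L])%:R].
Proof.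
move=> uL rep.
pose f p := ~: [set i in take p L].
pose F := map f (rev (iota 1 (size L))).
have chainF : polystell_chain pi I F.
  split; [|split].
  - apply: sorted_rev_iota => p p0 pL.
    case E: L pL uL => [|a0 L'] // pL uL; rewrite -E in pL uL *.
    rewrite /f properC (take_nth a0 pL) properE; apply/andP; split.
      by apply/fintype.subsetP => x; rewrite !inE mem_rcons in_cons orbC => ->.
    apply/negP => /fintype.subsetP /(_ (nth a0 L p)); rewrite !inE mem_rcons mem_head => /(_ isT).
    by move/index_ltn; rewrite index_uniq // ltnn.
  - move=> A /mapP [p]; rewrite mem_rev mem_iota => /andP [p1 pL] ->.
    rewrite /f properT; case E: L pL => [|a L'] pL; first by move: pL p1 => /=; lia.
    apply/eqP => EE; have : a \in ~: [set i in take p (a :: L')] by rewrite EE inE.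
    by case: p p1 {pL EE} => // p _; rewrite !inE eqxx.
  - move=> A HA; rewrite head_rev_iota.
    case E: (size L) => [|k]; first by rewrite finset.subsetT.
    rewrite /f -E take_size; apply/fintype.subsetP => i iA; rewrite !inE; apply/negP => iL.
    have [j [pj jI]] := rep i iL.
    have : j \in pi @^-1: A by rewrite inE pj.
    by move/(fintype.subsetP HA) => jI'; rewrite jI' in jI.
have [x [Qx Hx]] := coneB (gs := gens R pi I F) sn (Hdef chainF).
exists x; split => //.
  move=> j jI; apply/eqP; rewrite eq_le Ht // andbT.
  by have := Hx _ (@gens_memI R _ _ pi I F j jI) t Qt; rewrite !dotv_evec1.
have key : forall p, (0 < p)%N -> (p <= size L)%N ->
    fA [set i in take p L] x = (rkA [set i in take p L])%:R.
  move=> p p0 pL; apply: rkA_max => // y Qy.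
  have fF : f p \in F by apply: map_f; rewrite mem_rev mem_iota p0 add1n ltnS.
  have := Hx _ (@gens_memA R _ _ pi I F (f p) fF) y Qy.
  have Ef : ~: f p = [set i in take p L] by rewrite /f finset.setCK.
  by rewrite Ef !dotvNl lerN2 !fA_dot lerD2r.
case=> [|p]; first by rewrite take0 set_nil fA0 rkA0.
have [pL|pL] := leqP p.+1 (size L); first exact: key.
rewrite take_oversize; last exact: ltnW.
case E: (size L) => [|k]; first by move/eqP: E; rewrite size_eq0 => /eqP ->; rewrite set_nil fA0 rkA0.
by rewrite -(take_size L) key // E.
Qed.


Lemma fA_mono (A B : {set 'I_m}) y : A \subset B -> conv s y -> fA A y <= fA B y.
Proof.
move=> AB Qy; apply: sum_sub; first exact: preimsetS.
by move=> j _; rewrite subr_ge0 Ht.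
Qed.

Lemma rkA_mono (A B : {set 'I_m}) : A \subset B -> (rkA A <= rkA B)%N.
Proof.
move=> AB; apply/bigmax_leqP => i _; apply: leq_trans (leq_bigmax i).
by rewrite -(ler_nat R) !fA_trunc fA_mono //; exact: conv_nth.
Qed.

Definition im : {set 'I_m} := [set i | [exists j, pi j == i]].

Lemma fA_im A v : fA A v = fA (A :&: im) v.
Proof.
rewrite /fA; have -> // : pi @^-1: (A :&: im) = pi @^-1: A.
apply/finset.setP => j; rewrite !inE; case: (pi j \in A) => //=.
by apply/existsP; exists j.
Qed.

Lemma rkA_im A : rkA A = rkA (A :&: im).
Proof. by rewrite /rkA; apply: eq_bigr => i _; rewrite fA_im. Qed.

Lemma rkA_sub_im (A B : {set 'I_m}) : A \subset im -> B \subset im ->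
  (rkA (A :|: B) + rkA (A :&: B) <= rkA A + rkA B)%N.
Proof.
move=> Aim Bim.
pose L := enum (A :&: B) ++ enum ((A :|: B) :\: (A :&: B)).
have uL : uniq L.
  rewrite cat_uniq !enum_uniq andbT /=; apply/hasPn => x.
  by rewrite !mem_enum inE => /andP [].
have memL : forall x, (x \in L) = (x \in A :|: B).
  move=> x; rewrite mem_cat !mem_enum !inE.
  by case: (x \in A); case: (x \in B).
have rep : forall i, i \in L -> exists j, pi j = i /\ j \notin (finset.set0 : {set 'I_n}).
  move=> i; rewrite memL => iAB.
  have : i \in im by move: iAB; rewrite inE => /orP [/(fintype.subsetP Aim)|/(fintype.subsetP Bim)].
  by rewrite inE => /existsP [j /eqP pj]; exists j; rewrite inE.
have [x [Qx _ Hx]] := chain_pt uL rep.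
have H1 := Hx (size (enum (A :&: B))).
rewrite take_size_cat // set_enum in H1.
have H2 := Hx (size L); rewrite take_size in H2.
have SL : [set x in L] = A :|: B by apply/finset.setP => y; rewrite inE memL.
rewrite SL in H2.
rewrite -(ler_nat R) !natrD -H1 -H2.
have -> : fA (A :|: B) x + fA (A :&: B) x = fA A x + fA B x.
  by rewrite /fA preimsetU preimsetI sum_UI.
by rewrite lerD // rkA_ub.
Qed.

Lemma rkA_sub (A B : {set 'I_m}) : (rkA (A :|: B) + rkA (A :&: B) <= rkA A + rkA B)%N.
Proof.
have E1 : (A :|: B) :&: im = (A :&: im) :|: (B :&: im) by rewrite finset.setIUl.
have E2 : (A :&: B) :&: im = (A :&: im) :&: (B :&: im) by rewrite finset.setIACA finset.setIid.
rewrite (rkA_im (A :|: B)) (rkA_im (A :&: B)) (rkA_im A) (rkA_im B) E1 E2.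
by apply: rkA_sub_im; apply: finset.subsetIr.
Qed.

Lemma rkA_poly : polymatroid rkA.
Proof. by split; [exact: rkA0 | split; [exact: rkA_mono | exact: rkA_sub]]. Qed.


Lemma conv_sub y : conv s y -> translate t (@indep_polytope R n (expansion pi rkA)) y.
Proof.
move=> Qy; exists (y - t); last by rewrite subrK.
split; first by move=> j; rewrite !mxE subr_ge0 Ht.
move=> S; rewrite /expansion; apply: le_trans (rkA_ub (pi @: S) Qy).
rewrite /fA; under eq_bigr do rewrite !mxE.
apply: sum_sub; last by move=> j _; rewrite subr_ge0 Ht.
by apply/fintype.subsetP => j jS; rewrite inE; apply: imset_f.
Qed.

Lemma rev_incl (z' w : 'rV[R]_n) : indep_polytope (expansion pi rkA) z' ->
  (forall y, conv s y -> dotv w (z' + t) + 1 <= dotv w y) -> False.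
Proof.
move=> [z0 zS] Hw.
pose jm i : option 'I_n := if [pick j | pi j == i] is Some j0
  then Some [arg min_(j < j0 | pi j == i) w 0 j]%O else None.
have jmP : forall i j, jm i = Some j -> pi j = i /\ forall j', pi j' = i -> w 0 j <= w 0 j'.
  move=> i j; rewrite /jm; case: pickP => // j0 pj0 [<-].
  case: (@arg_minP _ _ _ j0 (fun j => pi j == i) (fun j => w 0 j) pj0) => j1 /eqP pj1 H.
  by split => // j' pj'; apply: H; rewrite /= pj'.
have jmN : forall i, jm i = None -> forall j, pi j != i.
  by move=> i; rewrite /jm; case: pickP => // H _ j; rewrite H.
have jm_fib : forall j, exists j', jm (pi j) = Some j'.
  move=> j; case E: (jm (pi j)) => [j'|]; first by exists j'.
  by have := jmN _ E j; rewrite eqxx.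
pose nu i := if jm i is Some j then (if w 0 j < 0 then w 0 j else 0) else 0.
have nu_le0 : forall i, nu i <= 0.
  by move=> i; rewrite /nu; case: (jm i) => // j; case: ifP => // /ltW.
have nu_w : forall j, nu (pi j) <= w 0 j.
  move=> j; have [j' E] := jm_fib j; rewrite /nu E; have [_ H] := jmP _ _ E.
  case: ifP => wj; first exact: H.
  by apply: le_trans (H j erefl); rewrite leNgt wj.
have nu_neg : forall i, nu i < 0 -> exists j, pi j = i /\ nu i = w 0 j.
  move=> i; rewrite /nu; case E: (jm i) => [j|]; last by rewrite ltxx.
  case: ifP => wj; last by rewrite ltxx.
  move=> _; exists j; by have [pj _] := jmP _ _ E.
pose L := sort (fun a b => nu a <= nu b) [seq i <- enum 'I_m | nu i < 0].
pose I := [set j | nu (pi j) != w 0 j].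
have memL : forall i, (i \in L) = (nu i < 0) by move=> i; rewrite mem_sort mem_filter mem_enum andbT.
have uL : uniq L by rewrite sort_uniq filter_uniq // enum_uniq.
have rep : forall i, i \in L -> exists j, pi j = i /\ j \notin I.
  move=> i; rewrite memL => /nu_neg [j [pj nj]]; exists j; split => //.
  by rewrite inE negbK pj nj.
have [x [Qx xI xp]] := chain_pt uL rep.
have Hx := Hw x Qx.
pose v := z' + t - x.
have vE : forall j, v 0 j = z' 0 j + t 0 j - x 0 j by move=> j; rewrite !mxE.
pose V i := \sum_(j | pi j == i) v 0 j.
have key : 0 <= dotv w v.
  rewrite /dotv (eq_bigr (fun j => (w 0 j - nu (pi j)) * v 0 j + nu (pi j) * v 0 j));
    last by move=> j _; rewrite -mulrDl subrK.
  rewrite big_split /=; apply: addr_ge0.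
    apply: sumr_ge0 => j _; have [jI|jI] := boolP (j \in I).
      apply: mulr_ge0; first by rewrite subr_ge0 nu_w.
      by rewrite vE xI // addrK z0.
    by move: jI; rewrite inE negbK => /eqP ->; rewrite subrr mul0r.
  have E1 : \sum_j nu (pi j) * v 0 j = \sum_i nu i * V i.
    rewrite (partition_big pi predT) //=; apply: eq_bigr => i _.
    by rewrite /V mulr_sumr; apply: eq_bigr => j /eqP ->.
  have E2 : \sum_i nu i * V i = \sum_(i <- L) nu i * V i.
    rewrite (perm_big _ (permEl (perm_sort _ _))) big_filter.
    rewrite [LHS](bigID (fun i => nu i < 0)) /= [X in _ + X]big1 ?addr0; last first.
      move=> i; rewrite -leNgt => nge.
      have E0 : nu i = 0 by apply/eqP; rewrite eq_le nu_le0 nge.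
      by rewrite E0 mul0r.
    by rewrite big_enum_cond.
  rewrite E1 E2.
  have := @abel R _ nu V L 0.
  rewrite mulr0 addr0; apply.
  - by apply: sort_sorted => a b; exact: le_total.
  - by apply/allP => i; rewrite memL => /ltW.
  move=> p; rewrite add0r (big_uniq _ (take_uniq p uL)).
  set B := [set x in take p L].
  have -> : \sum_(i in take p L) V i = \sum_(i in B) V i by apply: eq_bigl => i; rewrite inE.
  have -> : \sum_(i in B) V i = \sum_(j in pi @^-1: B) v 0 j.
    rewrite [RHS](partition_big pi (mem B)) => [|j]; last by rewrite inE.
    apply: eq_bigr => i iB; apply: eq_bigl => j; rewrite inE.
    by have [->|ne] := eqVneq (pi j) i; [rewrite iB | rewrite andbF].
  have := xp p; rewrite -/B /fA => Hf.
  have -> : \sum_(j in pi @^-1: B) v 0 j =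
            \sum_(j in pi @^-1: B) z' 0 j - \sum_(j in pi @^-1: B) (x 0 j - t 0 j).
    by rewrite -sumrB; apply: eq_bigr => j _; rewrite vE; ring.
  rewrite Hf subr_le0; apply: le_trans (zS _) _; rewrite /expansion ler_nat.
  apply: rkA_mono; apply/fintype.subsetP => i /imsetP [j]; rewrite inE => jB ->; exact: jB.
have : dotv w v = dotv w (z' + t) - dotv w x by rewrite /v dotvBr.
lra.
Qed.

End DirA.

End MP7.
Import MP7.

Unset Implicit Arguments. Set Strict Implicit. Set Printing Implicit Defensive.
Local Open Scope ring_scope.
Local Open Scope classical_set_scope.

Theorem proposition2p7 (R : realType) (m n : nat) (pi : 'I_n -> 'I_m)
    (Q : set 'rV[R]_n) :
  lattice_polytope Q ->
  (deformation_of_polystell pi Q <->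
   exists (rk : {set 'I_m} -> nat) (t : 'rV[R]_n),
     polymatroid rk /\ Q = translate t (@indep_polytope R n (expansion pi rk))).
Proof.
move=> [s [sn [slat ->]]]; split; last first.
  by move=> [rk [t [Hp ->]]]; apply: dirB.
move=> Hdef.
have ch : polystell_chain pi [set: 'I_n]%SET [::].
  by split => //; split => // A _; exact: finset.subsetT.
have [t [Qt Ht0]] := coneB (gs := gens R pi [set: 'I_n]%SET [::]) sn (Hdef _ _ ch).
have Ht : forall j y, conv s y -> t 0 j <= y 0 j.
  move=> j y Qy; have := Ht0 _ (@gens_memI R _ _ pi [set: 'I_n]%SET [::] j (finset.in_setT j)) y Qy.
  by rewrite !dotv_evec1.
exists (rkA pi s t), t; split; first exact: (rkA_poly sn slat Hdef Qt Ht).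
apply/seteqP; split => z.
  exact: (conv_sub pi sn slat Qt Ht).
move=> [z' zind <-].
have [//|[w Hw]] := separation s (z' + t).
by exfalso; apply: (rev_incl sn slat Hdef Qt Ht zind Hw).
Qed.
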